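(* Let $L,M$ be distributive lattices and $T:\mathrm{FBL}\langle L\rangle\to\mathrm{FBL}\langle M\rangle$ a (linear) lattice homomorphism. For $y^*\in M^*$ define $\Phi_T(y^* ):L\to\mathbb R$ by $\Phi_T(y^* )(x)=(T\delta_x)(y^* )$. Then: (1) for every $y^*\in M^*$, $\Phi_T(y^* )$ is a lattice homomorphism $L\to\mathbb R$; (2) $|\Phi_T(y^* )(x)|\le\|T\|$ for all $y^*\in M^*$, $x\in L$; in particular, if $\|T\|\le1$ then $\Phi_T(M^* )\subseteq L^*$; (3) $\Phi_T$ is positively homogeneous: if $y^*\in M^*$, $\lambda\ge0$ and $\lambda y^*\in M^*$, then $\Phi_T(\lambda y^* )=\lambda\Phi_T(y^* )$; (4) if $\|T\|\le1$, then $(Tf)(y^* )=f(\Phi_T(y^* ))$ for every $f\in\mathrm{FBL}\langle L\rangle$ and $y^*\in M^*$.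
   Context: For a distributive lattice $L$, $L^*$ is the set of all lattice homomorphisms $x^*:L\to[-1,1]$; for $x\in L$, $\delta_x:L^*\to\mathbb R$ is $\delta_x(x^* )=x^*(x)$. A function $f:L^*\to\mathbb R$ is positively homogeneous if $f(\lambda x^* )=\lambda f(x^* )$ whenever $\lambda\ge0$ and $\lambda x^*\in L^*$; for such $f$, $\|f\|=\sup\{\sum_{i=1}^m|f(x_i^* )|: m\in\mathbb N,\ x_i^*\in L^*,\ \sup_{x\in L}\sum_{i=1}^m|x_i^*(x)|\le1\}$. $\mathrm{FBL}\langle L\rangle$ is the norm closure of the vector sublattice generated by $\{\delta_x:x\in L\}$ inside the Banach lattice of positively homogeneous functions on $L^*$ with finite norm, with pointwise order and operations (so its elements are functions on $L^*$ and point evaluations are continuous). *)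

(* Defs.v *)
From HB Require Import structures.
From mathcomp Require Import all_boot all_order all_algebra.
From mathcomp Require Import boolp classical_sets reals constructive_ereal ereal.
Set Implicit Arguments. Unset Strict Implicit. Unset Printing Implicit Defensive.
Import Order.TTheory GRing.Theory Num.Theory.
Local Open Scope ring_scope.
Local Open Scope classical_set_scope.

Section FBL.
Variable R : realType.

Definition lattice_hom {d} (L : distrLatticeType d) (x : L -> R) : Prop :=
  forall a b : L, x (Order.meet a b) = Order.min (x a) (x b) /\
                  x (Order.join a b) = Order.max (x a) (x b).

Definition is_Lstar {d} (L : distrLatticeType d) (x : L -> R) : Prop :=
  lattice_hom x /\ forall a, `|x a| <= 1.

Definition Lstar {d} (L : distrLatticeType d) := {x : L -> R | is_Lstar x}.

Definition delta {d} {L : distrLatticeType d} (a : L) : Lstar L -> R :=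
  fun xs => proj1_sig xs a.

Definition pos_homogeneous {d} {L : distrLatticeType d} (f : Lstar L -> R) : Prop :=
  forall (x y : Lstar L) (lam : R), 0 <= lam ->
    (forall a, proj1_sig y a = lam * proj1_sig x a) -> f y = lam * f x.

Definition fbl_norm {d} {L : distrLatticeType d} (f : Lstar L -> R) : \bar R :=
  ereal_sup [set r | exists (m : nat) (xs : 'I_m -> Lstar L),
     (forall a : L, \sum_(i < m) `|proj1_sig (xs i) a| <= 1) /\
     r = (\sum_(i < m) `|f (xs i)|)%:E].

(* the ambient Banach lattice: positively homogeneous functions with finite norm *)
Definition PH {d} (L : distrLatticeType d) : set (Lstar L -> R) :=
  [set f | pos_homogeneous f /\ (fbl_norm f < +oo)%E].
Arguments PH {d} L.

Definition vector_sublattice {d} {L : distrLatticeType d} (S : set (Lstar L -> R)) : Prop :=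
  [/\ S (fun _ => 0),
      (forall f g, S f -> S g -> S (fun x => f x + g x)),
      (forall (c : R) f, S f -> S (fun x => c * f x)),
      (forall f g, S f -> S g -> S (fun x => Order.max (f x) (g x))) &
      (forall f g, S f -> S g -> S (fun x => Order.min (f x) (g x)))].

Definition gen_sublattice {d} (L : distrLatticeType d) : set (Lstar L -> R) :=
  [set f | forall S : set (Lstar L -> R), S `<=` PH L -> vector_sublattice S ->
             (forall a : L, S (delta a)) -> S f].
Arguments gen_sublattice {d} L.

Definition FBL {d} (L : distrLatticeType d) : set (Lstar L -> R) :=
  [set f | PH L f /\ forall e : R, 0 < e ->
     exists g, gen_sublattice L g /\ (fbl_norm (fun x => (f x - g x)%R) < e%:E)%E].
Arguments FBL {d} L.

Definition fbl_lattice_hom {d1 d2} {L : distrLatticeType d1} {M : distrLatticeType d2}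
  (T : (Lstar L -> R) -> (Lstar M -> R)) : Prop :=
  [/\ (forall f, FBL L f -> FBL M (T f)),
      (forall f g (a b : R), FBL L f -> FBL L g ->
          T (fun x => a * f x + b * g x) = (fun y => a * T f y + b * T g y)),
      (forall f g, FBL L f -> FBL L g ->
          T (fun x => Order.max (f x) (g x)) = (fun y => Order.max (T f y) (T g y))) &
      (forall f g, FBL L f -> FBL L g ->
          T (fun x => Order.min (f x) (g x)) = (fun y => Order.min (T f y) (T g y)))].

Definition op_norm {d1 d2} {L : distrLatticeType d1} {M : distrLatticeType d2}
  (T : (Lstar L -> R) -> (Lstar M -> R)) : \bar R :=
  ereal_sup [set fbl_norm (T f) | f in [set f | FBL L f /\ (fbl_norm f <= 1)%E]].

Definition PhiT {d1 d2} {L : distrLatticeType d1} {M : distrLatticeType d2}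
  (T : (Lstar L -> R) -> (Lstar M -> R)) (y : Lstar M) : L -> R :=
  fun a => T (delta a) y.

End FBL.
Arguments PH {R d} L.
Arguments gen_sublattice {R d} L.
Arguments FBL {R d} L.

(* Main.v *)
Require Import Defs.
From HB Require Import structures.
From mathcomp Require Import all_boot all_order all_algebra.
From mathcomp Require Import boolp classical_sets reals constructive_ereal ereal.
From mathcomp Require Import ring lra.
Import Order.TTheory GRing.Theory Num.Theory.
Local Open Scope ring_scope.
Local Open Scope classical_set_scope.

Section Aux.
Variable R : realType.
Variable d : Order.disp_t.
Variable L : distrLatticeType d.
Implicit Types (f g h : Lstar R L -> R).

Definition adm {m : nat} (xs : 'I_m -> Lstar R L) :=
  forall a : L, \sum_(i < m) `|proj1_sig (xs i) a| <= 1.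

Definition small (h : Lstar R L -> R) (e : R) : Prop :=
  forall (m : nat) (xs : 'I_m -> Lstar R L), adm xs -> \sum_(i < m) `|h (xs i)| <= e.

Lemma elem_le h m (xs : 'I_m -> Lstar R L) : adm xs ->
  ((\sum_(i < m) `|h (xs i)|)%:E <= fbl_norm h)%E.
Proof. move=> hx; apply: ereal_sup_ubound; by exists m, xs; split. Qed.

Lemma norm_le h B : small h B -> (fbl_norm h <= B%:E)%E.
Proof.
move=> hs; apply: ge_ereal_sup => r [m [xs [hx ->]]].
by rewrite lee_fin; apply: hs.
Qed.
Arguments norm_le {h B}.


Lemma norm_ge0 h : (0%:E <= fbl_norm h)%E.
Proof.
have xs : 'I_0 -> Lstar R L by move=> [m hm]; exfalso; rewrite ltn0 in hm.
have := @elem_le h 0 xs.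
rewrite big_ord0; apply => a; rewrite big_ord0; exact: ler01.
Qed.

Lemma small_of_lt h e : (fbl_norm h < e%:E)%E -> small h e.
Proof.
move=> hl m xs hx; have := @elem_le h _ _ hx => hle.
have := le_lt_trans hle hl; rewrite lte_fin => /ltW //.
Qed.
Arguments small_of_lt {h e}.


Lemma small_of_le h e : (fbl_norm h <= e%:E)%E -> small h e.
Proof.
move=> hl m xs hx; have := @elem_le h _ _ hx => hle.
by have := le_trans hle hl; rewrite lee_fin.
Qed.
Arguments small_of_le {h e}.


Lemma lt_of_small h e e' : small h e' -> e' < e -> (fbl_norm h < e%:E)%E.
Proof.
move=> hs hlt; apply: le_lt_trans (norm_le hs) _; by rewrite lte_fin.
Qed.
Arguments lt_of_small {h} e {e'}.


Lemma fin_small h : (fbl_norm h < +oo)%E <-> exists B, small h B.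
Proof.
split.
- move=> hl; have h0 := norm_ge0 h.
  case E: (fbl_norm h) hl h0 => [r| |] //= _ _.
  exists r; apply: small_of_le; by rewrite E.
- move=> [B hB]; apply: le_lt_trans (norm_le hB) _; exact: ltry.
Qed.

Lemma small_comb f g h c1 c2 e1 e2 : 0 <= c1 -> 0 <= c2 ->
  small f e1 -> small g e2 ->
  (forall x, `|h x| <= c1 * `|f x| + c2 * `|g x|) ->
  small h (c1 * e1 + c2 * e2).
Proof.
move=> c1p c2p sf sg hp m xs hx.
apply: le_trans (ler_sum _ (fun i _ => hp (xs i))) _.
rewrite big_split /= -!mulr_sumr.
by apply: lerD; apply: ler_wpM2l => //; [apply: sf | apply: sg].
Qed.
Arguments small_comb {f g h c1 c2 e1 e2}.


Lemma norm_max (a b : R) : `|Order.max a b| <= `|a| + `|b|.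
Proof.
rewrite /Order.max; case: ifP => _; [by rewrite lerDr | by rewrite lerDl].
Qed.

Lemma norm_min (a b : R) : `|Order.min a b| <= `|a| + `|b|.
Proof.
rewrite /Order.min; case: ifP => _; [by rewrite lerDl | by rewrite lerDr].
Qed.

Lemma PH_vs : vector_sublattice (PH (R:=R) L).
Proof.
split.
- split; first by move=> x y lam _ _; rewrite mulr0.
  apply/fin_small; exists 0 => m xs _; rewrite big1 // => i _; exact: normr0.
- move=> f g [pf /fin_small [B1 s1]] [pg /fin_small [B2 s2]]; split.
    by move=> x y lam l0 hy; rewrite (pf x y lam l0 hy) (pg x y lam l0 hy) mulrDr.
  apply/fin_small; exists (1 * B1 + 1 * B2); apply: small_comb s1 s2 _ => // x.
  by rewrite !mul1r ler_normD.
- move=> c f [pf /fin_small [B1 s1]]; split.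
    by move=> x y lam l0 hy; rewrite (pf x y lam l0 hy) mulrCA.
  apply/fin_small; exists (`|c| * B1 + 0 * B1); apply: (@small_comb f f _ `|c| 0 B1 B1 _ _ s1 s1) => // x.
  by rewrite mul0r addr0 normrM.
- move=> f g [pf /fin_small [B1 s1]] [pg /fin_small [B2 s2]]; split.
    by move=> x y lam l0 hy; rewrite (pf x y lam l0 hy) (pg x y lam l0 hy) maxr_pMr.
  apply/fin_small; exists (1 * B1 + 1 * B2); apply: small_comb s1 s2 _ => // x.
  by rewrite !mul1r norm_max.
- move=> f g [pf /fin_small [B1 s1]] [pg /fin_small [B2 s2]]; split.
    by move=> x y lam l0 hy; rewrite (pf x y lam l0 hy) (pg x y lam l0 hy) minr_pMr.
  apply/fin_small; exists (1 * B1 + 1 * B2); apply: small_comb s1 s2 _ => // x.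
  by rewrite !mul1r norm_min.
Qed.

Lemma delta_PH (a : L) : PH (R:=R) L (delta a).
Proof.
split; first by move=> x y lam _ hy; rewrite /delta hy.
apply/fin_small; exists 1 => m xs hx; exact: hx.
Qed.

Lemma gen_PH f : gen_sublattice (R:=R) L f -> PH (R:=R) L f.
Proof. move=> hf; apply: hf => //; [exact: PH_vs | exact: delta_PH]. Qed.

Lemma gen_vs : vector_sublattice (gen_sublattice (R:=R) L).
Proof.
split.
- by move=> S _ [].
- by move=> f g hf hg S hS vS hd; case: (vS) => _ hp _ _ _; apply: hp; [apply: hf|apply: hg].
- by move=> c f hf S hS vS hd; case: (vS) => _ _ hp _ _; apply: hp; apply: hf.
- by move=> f g hf hg S hS vS hd; case: (vS) => _ _ _ hp _; apply: hp; [apply: hf|apply: hg].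
- by move=> f g hf hg S hS vS hd; case: (vS) => _ _ _ _ hp; apply: hp; [apply: hf|apply: hg].
Qed.

Lemma small0 (e : R) : 0 <= e -> small (fun _ => 0) e.
Proof. by move=> he m xs _; rewrite big1 // => i _; rewrite normr0. Qed.

Lemma gen_FBL f : gen_sublattice (R:=R) L f -> FBL (R:=R) L f.
Proof.
move=> hf; split; first exact: gen_PH.
move=> e he; exists f; split => //.
apply: (@lt_of_small _ _ 0) => //.
move=> m xs hx; rewrite big1 // => i _; by rewrite subrr normr0.
Qed.

Lemma delta_FBL (a : L) : FBL (R:=R) L (delta a).
Proof. apply: gen_FBL => S _ _; exact. Qed.

Lemma zero_FBL : FBL (R:=R) L (fun _ => 0).
Proof. apply: gen_FBL; by case: gen_vs. Qed.

Lemma FBL_comb f g (a b : R) : FBL (R:=R) L f -> FBL (R:=R) L g ->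
  FBL L (fun x => a * f x + b * g x).
Proof.
move=> [pf af] [pg ag]; split.
  case: PH_vs => _ hD hZ _ _; apply: hD; exact: hZ.
move=> e he.
set k := 2 * (`|a| + `|b| + 1).
have kp : 0 < k by rewrite mulr_gt0 // ltr_wpDl // addr_ge0.
have ek : 0 < e / k by rewrite divr_gt0.
have [f' [gf' nf]] := af _ ek; have [g' [gg' ng]] := ag _ ek.
exists (fun x => a * f' x + b * g' x); split.
  case: gen_vs => _ hD hZ _ _; apply: hD; exact: hZ.
apply: (@lt_of_small _ _ (`|a| * (e / k) + `|b| * (e / k))).
  apply: small_comb (small_of_lt nf) (small_of_lt ng) _ => // x.
  rewrite -[_ - _]/(a * f x + b * g x - (a * f' x + b * g' x)).
  have -> : a * f x + b * g x - (a * f' x + b * g' x) =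
            a * (f x - f' x) + b * (g x - g' x) by ring.
  by apply: le_trans (ler_normD _ _) _; rewrite !normrM.
rewrite -mulrDl.
have sk : (`|a| + `|b|) / k < 1.
  rewrite ltr_pdivrMr // mul1r /k.
  have := normr_ge0 a; have := normr_ge0 b; lra.
have -> : (`|a| + `|b|) * (e / k) = e * ((`|a| + `|b|) / k) by ring.
by rewrite -[X in _ < X]mulr1 ltr_pM2l.
Qed.

End Aux.
Arguments adm {R d L m}.
Arguments small {R d L}.
Arguments elem_le {R d L} h {m}.
Arguments norm_le {R d L h B}.
Arguments norm_ge0 {R d L}.
Arguments small_of_lt {R d L h e}.
Arguments small_of_le {R d L h e}.
Arguments lt_of_small {R d L h} e {e'}.
Arguments small_comb {R d L f g h c1 c2 e1 e2}.
Arguments gen_PH {R d L f}.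
Arguments gen_vs {R d L}.
Arguments gen_FBL {R d L f}.
Arguments delta_FBL {R d L}.
Arguments zero_FBL {R d L}.
Arguments FBL_comb {R d L f g}.

Theorem mainTheorem17 (R : realType) (d1 d2 : Order.disp_t)
  (L : distrLatticeType d1) (M : distrLatticeType d2)
  (T : (Lstar R L -> R) -> (Lstar R M -> R)) :
  fbl_lattice_hom T ->
  [/\ (* (1) *)
      (forall y : Lstar R M, lattice_hom (PhiT T y)),
      (* (2) *)
      (forall (y : Lstar R M) (a : L), (`|PhiT T y a|%:E <= op_norm T)%E) /\
      ((op_norm T <= 1)%E -> forall y : Lstar R M, is_Lstar (PhiT T y)),
      (* (3) *)
      (forall (y y' : Lstar R M) (lam : R), 0 <= lam ->
         (forall b : M, proj1_sig y' b = lam * proj1_sig y b) ->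
         PhiT T y' = (fun a => lam * PhiT T y a)) &
      (* (4) *)
      ((op_norm T <= 1)%E -> forall y : Lstar R M,
         exists x : Lstar R L, proj1_sig x = PhiT T y /\
           forall f, FBL L f -> T f y = f x)].
Proof.
move=> [TF Tlin Tmax Tmin].
have evalb : forall (h : Lstar R M -> R) (y : Lstar R M) B, small h B -> `|h y| <= B.
  move=> h y B hs; have := hs 1%N (fun _ => y); rewrite big_ord1; apply => b.
  rewrite big_ord1; exact: (proj2 (proj2_sig y) b).
have evalbL : forall (h : Lstar R L -> R) (y : Lstar R L) B, small h B -> `|h y| <= B.
  move=> h y B hs; have := hs 1%N (fun _ => y); rewrite big_ord1; apply => b.
  rewrite big_ord1; exact: (proj2 (proj2_sig y) b).
have P1 : forall y : Lstar R M, lattice_hom (PhiT T y).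
  move=> y a b; rewrite /PhiT; split.
  - have -> : delta (Order.meet a b) =
        (fun z => Order.min (delta a z) (delta b z) : R).
      apply/funext => z; exact: ((proj1 (proj2_sig z)) a b).1.
    by rewrite Tmin //; exact: delta_FBL.
  - have -> : delta (Order.join a b) =
        (fun z => Order.max (delta a z) (delta b z) : R).
      apply/funext => z; exact: ((proj1 (proj2_sig z)) a b).2.
    by rewrite Tmax //; exact: delta_FBL.
have P2a : forall (y : Lstar R M) (a : L), (`|PhiT T y a|%:E <= op_norm T)%E.
  move=> y a; apply: le_trans (_ : fbl_norm (T (delta a)) <= _)%E.
    have := @elem_le R _ M (T (delta a)) 1%N (fun _ => y).
    rewrite big_ord1; apply => b; rewrite big_ord1; exact: (proj2 (proj2_sig y) b).
  apply: ereal_sup_ubound; exists (delta a) => //; split; first exact: delta_FBL.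
  apply: norm_le => m xs hx; exact: hx.
have P2b : (op_norm T <= 1)%E -> forall y : Lstar R M, is_Lstar (PhiT T y).
  move=> hT y; split; first exact: P1.
  by move=> a; rewrite -lee_fin; apply: le_trans (P2a y a) hT.
split => //.
- move=> y y' lam l0 hy; apply/funext => a; rewrite /PhiT.
  have [[ph _] _] := TF _ (delta_FBL a); exact: ph.
move=> hT y; exists (exist _ (PhiT T y) (P2b hT y)); split => //.
set x := exist _ _ _.
have T0 : T (fun _ => 0) = (fun _ => 0).
  have := Tlin _ _ 0 0 (@zero_FBL R _ L) (@zero_FBL R _ L).
  rewrite (_ : (fun _ => _) = (fun _ => 0)); last by apply/funext => z; rewrite !mul0r addr0.
  by move=> ->; apply/funext => z; rewrite !mul0r addr0.
have Hgen : forall g, gen_sublattice L g -> T g y = g x.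
  move=> g hg; have : [set f | gen_sublattice L f /\ T f y = f x] g; last by case.
  apply: hg.
  - by move=> f [hf _]; exact: gen_PH.
  - case: (@gen_vs R _ L) => g0 gD gZ gM gm; split.
    + by split => //; rewrite T0.
    + move=> f h [hf ef] [hh eh]; split; first exact: gD.
      have := Tlin _ _ 1 1 (gen_FBL hf) (gen_FBL hh).
      rewrite (_ : (fun _ => _) = (fun z => f z + h z)); last by apply/funext => z; rewrite !mul1r.
      by move=> ->; rewrite !mul1r ef eh.
    + move=> c f [hf ef]; split; first exact: gZ.
      have := Tlin _ _ c 0 (gen_FBL hf) (gen_FBL hf).
      rewrite (_ : (fun _ => _) = (fun z => c * f z)); last by apply/funext => z; rewrite mul0r addr0.
      by move=> ->; rewrite mul0r addr0 ef.
    + move=> f h [hf ef] [hh eh]; split; first exact: gM.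
      by rewrite Tmax ?ef ?eh //; exact: gen_FBL.
    + move=> f h [hf ef] [hh eh]; split; first exact: gm.
      by rewrite Tmin ?ef ?eh //; exact: gen_FBL.
  - by move=> a; split => //; apply: (@delta_FBL R _ L).1 => S _ _; exact.
move=> f hf.
have key : forall e, 0 < e -> `|T f y - f x| <= e + e.
  move=> e he; have [_ /(_ e he) [g [hg ng]]] := hf.
  set h := fun z => f z - g z.
  have hh : FBL L h.
    have := FBL_comb 1 (-1) hf (gen_FBL hg).
    rewrite (_ : (fun _ => _) = h) //; apply/funext => z; rewrite /h; ring.
  have Th : T h y = T f y - T g y.
    have := Tlin _ _ 1 (-1) hf (gen_FBL hg).
    rewrite (_ : (fun _ => _) = h); last by apply/funext => z; rewrite /h; ring.
    by move=> ->; ring.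
  set h' := fun z => e^-1 * h z + 0 * h z.
  have hh' : FBL L h' by exact: FBL_comb.
  have Th' : T h' y = e^-1 * T h y by rewrite /h' Tlin // mul0r addr0.
  have nh' : (fbl_norm h' <= 1)%E.
    apply: norm_le.
    have -> : (1 : R) = e^-1 * e + 0 * e by rewrite mul0r addr0 mulVf // gt_eqF.
    apply: small_comb (small_of_lt ng) (small_of_lt ng) _ => //.
      by rewrite invr_ge0 ltW.
    by move=> z; rewrite /h' /h !mul0r !addr0 normrM ger0_norm // invr_ge0 ltW.
  have nTh' : (fbl_norm (T h') <= 1)%E.
    apply: (le_trans _ hT); apply: ereal_sup_ubound; exists h' => //.
  have b1 : `|T h y| <= e.
    have he' : 0 <= e^-1 by rewrite invr_ge0 ltW.
    have := evalb _ y _ (small_of_le nTh'); rewrite Th' normrM ger0_norm // => H.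
    have := ler_wpM2l (ltW he) H; by rewrite mulrA mulfV ?gt_eqF // mul1r mulr1.
  have b2 : `|h x| <= e := evalbL _ x _ (small_of_lt ng).
  have -> : T f y - f x = T h y - h x by rewrite Th (Hgen g hg) /h; ring.
  apply: le_trans (ler_normB _ _) _; exact: lerD.
apply/eqP; rewrite -subr_eq0 -normr_eq0; apply/eqP.
apply/le_anti; rewrite normr_ge0 andbT.
apply/ler_addgt0Pr => e he.
have two : (0:R) < 2 by rewrite ltr0n.
rewrite add0r; have := key (e / 2) (divr_gt0 he two).
by rewrite -splitr.
Qed.
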